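(* Consider any correct node-based data structure for the 2D $(+,\min)$ update-query problem over an $N\times M$ matrix, as described in the context, in which $S_U,S_C,S_Q$ are fixed functions of the submatrix. Then some update or some query must visit at least $\frac{NM}{N+M}$ nodes; more precisely, there is a submatrix $B$ such that $|S_U(B)|+|S_C(B)|\ge\frac{NM}{N+M}$ or $|S_Q(B)|\ge\frac{NM}{N+M}$.
   Context: Coordinates $G=\{0,\dots,N-1\}\times\{0,\dots,M-1\}$; a submatrix $[x_0,x_1][y_0,y_1]$ is the set of $(x,y)$ with $x_0\le x\le x_1$, $y_0\le y\le y_1$. The 2D $(+,\min)$ update-query problem: after initialization with a real matrix $A$, an update $U(B,v)$ adds $v$ to every $A[x][y]$ with $(x,y)\in B$, and a query $Q(B)$ must return $\min_{(x,y)\in B}A[x][y]$ of the current matrix. A node-based data structure uses a family $\mathcal{N}$ of pairwise distinct nonempty subsets of $G$ (nodes) containing every singleton $\{(x,y)\}$. Each node $n$ stores a value $n_V$ and a lazy value $n_Z$; at initialization $n_V=\min_{(x,y)\in n}A[x][y]$ and $n_Z=0$. The structure is specified by fixed functions assigning to each submatrix $B$ sets $S_U(B),S_C(B),S_Q(B)\subseteq\mathcal{N}$ with $\bigcup_{n\in S_U(B)}n=B$ and $\bigcup_{n\in S_Q(B)}n=B$. The update $U(B,v)$ sets $n_Z\gets n_Z+v$ for every $n\in S_U(B)$ and may change $m_V$ (in any way) for every $m\in S_C(B)$; no other stored values change; it visits the nodes of $S_U(B)$ and $S_C(B)$. The query $Q(B)$ returns $\min_{n\in S_Q(B)}\big(n_V+\sum_{m\in\mathcal{N},\,m\supseteq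 n}m_Z\big)$ and visits the nodes of $S_Q(B)$. The structure is correct if, for every initial matrix and every sequence of updates and queries, every query returns the correct answer. *)

(* Defs.v *)
From HB Require Import structures.
From mathcomp Require Import all_boot all_order all_algebra.
From mathcomp Require Import reals.
Set Implicit Arguments. Unset Strict Implicit. Unset Printing Implicit Defensive.
Import Order.TTheory GRing.Theory Num.Theory.
Local Open Scope ring_scope.

(* Minimum of f over a finite set S (0 if S is empty; only used for nonempty S). *)
Definition setmin (R : realType) (T : finType) (S : {set T}) (f : T -> R) : R :=
  match [pick c in S] with
  | Some c0 => \big[Order.min/f c0]_(c in S) f c
  | None => 0
  end.

Notation cell N M := ('I_N * 'I_M)%type.

Definition rect (N M : nat) (x0 x1 : 'I_N) (y0 y1 : 'I_M) : {set cell N M} :=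
  [set c : cell N M | ((x0 <= c.1 <= x1) && (y0 <= c.2 <= y1))%N].

Definition is_submatrix (N M : nat) (B : {set cell N M}) : Prop :=
  exists (x0 x1 : 'I_N) (y0 y1 : 'I_M),
    (x0 <= x1)%N /\ (y0 <= y1)%N /\ B = rect x0 x1 y0 y1.

Inductive op (R : realType) (N M : nat) :=
  | Upd of {set cell N M} & R
  | Qry of {set cell N M}.

Definition op_submatrix (R : realType) (N M : nat) (o : op R N M) : Prop :=
  match o with @Upd _ _ _ B _ => is_submatrix B | @Qry _ _ _ B => is_submatrix B end.

(* Node family: nonempty subsets of G (distinct as elements of a set),
   containing every singleton. *)
Definition node_family (N M : nat) (Nd : {set {set cell N M}}) : Prop :=
  (forall n, n \in Nd -> n != set0) /\ (forall c : cell N M, [set c] \in Nd).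

Definition valid_sets (N M : nat) (Nd : {set {set cell N M}})
  (SU SC SQ : {set cell N M} -> {set {set cell N M}}) (B : {set cell N M}) : Prop :=
  [/\ SU B \subset Nd, SC B \subset Nd, SQ B \subset Nd,
      \bigcup_(n in SU B) n = B & \bigcup_(n in SQ B) n = B].

(* A0 : initial matrix; pre : operations already performed (history);
   A : current true matrix; V, Z : stored values n_V and lazy values n_Z.
   On U(B,v): n_Z += v for n in S_U(B); for m in S_C(B), m_V is replaced by an
   arbitrary value chosen by the structure (the function chg, which may depend on
   the initial matrix and the whole history of operations including the current
   one); nothing else changes. *)
Fixpoint run_correct (R : realType) (N M : nat) (Nd : {set {set cell N M}})
  (SU SC SQ : {set cell N M} -> {set {set cell N M}})
  (chg : (cell N M -> R) -> seq (op R N M) -> {set cell N M} -> R)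
  (A0 : cell N M -> R) (pre : seq (op R N M)) (A : cell N M -> R)
  (V Z : {set cell N M} -> R) (os : seq (op R N M)) : Prop :=
  match os with
  | [::] => True
  | @Qry _ _ _ B :: os' =>
      setmin (SQ B) (fun n => V n + \sum_(m in Nd | n \subset m) Z m) = setmin B A
      /\ run_correct Nd SU SC SQ chg A0 (rcons pre (@Qry R N M B)) A V Z os'
  | @Upd _ _ _ B v :: os' =>
      let pre' := rcons pre (@Upd R N M B v) in
      run_correct Nd SU SC SQ chg A0 pre'
        (fun c => if c \in B then A c + v else A c)
        (fun n => if n \in SC B then chg A0 pre' n else V n)
        (fun n => if n \in SU B then Z n + v else Z n) os'
  end.

Definition ds_correct (R : realType) (N M : nat) (Nd : {set {set cell N M}})
  (SU SC SQ : {set cell N M} -> {set {set cell N M}})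
  (chg : (cell N M -> R) -> seq (op R N M) -> {set cell N M} -> R) : Prop :=
  forall (A0 : cell N M -> R) (os : seq (op R N M)),
    foldr (fun o P => op_submatrix o /\ P) True os ->
    run_correct Nd SU SC SQ chg A0 [::] A0 (fun n => setmin n A0) (fun _ => 0) os.

(* Main.v *)
Require Import Defs.
From HB Require Import structures.
From mathcomp Require Import all_boot all_order all_algebra.
From mathcomp Require Import reals.
From mathcomp Require Import lra.
Import Order.TTheory GRing.Theory Num.Theory.
Local Open Scope ring_scope.

Lemma setmin_le (R : realType) (T : finType) (S : {set T}) (f : T -> R) x :
  x \in S -> setmin S f <= f x.
Proof.
move=> xS; rewrite /setmin; case: pickP => [c0 _|h]; first exact: bigmin_le_cond.
by have := h x; rewrite xS.
Qed.

Lemma setmin_ge (R : realType) (T : finType) (S : {set T}) (f : T -> R) x a :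
  x \in S -> (forall y, y \in S -> a <= f y) -> a <= setmin S f.
Proof.
move=> xS H; rewrite /setmin; case: pickP => [c0 c0S|h].
  by apply: le_bigmin => //; apply: H.
by have := h x; rewrite xS.
Qed.

Lemma sum_bool_card (I : finType) (P : pred I) :
  (\sum_i (P i : nat) = #|[set i | P i]|)%N.
Proof.
rewrite -sum1_card [RHS]big_mkcond /=; apply: eq_bigr => i _; rewrite inE.
by case: (P i).
Qed.

Section S.
Variables (N M : nat) (hN : (0 < N)%N) (hM : (0 < M)%N).

Definition rowS (i : 'I_N) : {set 'I_N * 'I_M} := [set c | c.1 == i].
Definition colS (j : 'I_M) : {set 'I_N * 'I_M} := [set c | c.2 == j].

Lemma row_sub i : is_submatrix (rowS i).
Proof.
have hM' : (M.-1 < M)%N by rewrite prednK.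
exists i, i, (Ordinal hM), (Ordinal hM'); split => //; split => //=.
apply/setP => c; rewrite !inE /=.
have -> : (c.2 <= M.-1)%N by rewrite -ltnS prednK.
by rewrite andbT -eqn_leq eq_sym.
Qed.

Lemma col_sub j : is_submatrix (colS j).
Proof.
have hN' : (N.-1 < N)%N by rewrite prednK.
exists (Ordinal hN), (Ordinal hN'), j, j; split => //; split => //=.
apply/setP => c; rewrite !inE /=.
have -> : (c.1 <= N.-1)%N by rewrite -ltnS prednK.
by rewrite -eqn_leq eq_sym.
Qed.
End S.

Theorem theorem5 (R : realType) (N M : nat) (hN : (0 < N)%N) (hM : (0 < M)%N)
  (Nd : {set {set ('I_N * 'I_M)}})
  (SU SC SQ : {set ('I_N * 'I_M)} -> {set {set ('I_N * 'I_M)}})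
  (chg : (('I_N * 'I_M) -> R) -> seq (op R N M) -> {set ('I_N * 'I_M)} -> R) :
  node_family Nd ->
  (forall B, is_submatrix B -> valid_sets Nd SU SC SQ B) ->
  ds_correct Nd SU SC SQ chg ->
  exists B : {set ('I_N * 'I_M)}, is_submatrix B /\
    (((N * M)%:R / (N + M)%:R : R) <= (#|SU B| + #|SC B|)%:R
     \/ ((N * M)%:R / (N + M)%:R : R) <= #|SQ B|%:R).
Proof.
move=> hNd hval hcor.
pose row := rowS N M; pose col := colS N M.
have rowP i : is_submatrix (row i) by apply: row_sub.
have colP j : is_submatrix (col j) by apply: col_sub.
have key i j n : n \in SQ (col j) -> (i, j) \in n -> ~~ (n \subset row i) ->
    n \in SC (row i).
  move=> nQ ijn nsub; case: (boolP (n \in SC (row i))) => // nC; exfalso.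
  pose A0 := fun c : 'I_N * 'I_M => if c == (i, j) then 0 else 1 : R.
  have := hcor A0 [:: @Upd R N M (row i) 2; @Qry R N M (col j)].
  case.
    by split; [exact: rowP | split; [exact: colP|]].
  rewrite /=. move=> H _.
  have L : setmin (SQ (col j))
      (fun n : {set cell N M} =>
       (if n \in SC (row i)
        then chg A0 [:: Upd (R:=R) (N:=N) (M:=M) (row i) 2] n
        else setmin n A0) +
       \sum_(m in Nd | n \subset m) (if m \in SU (row i) then 0 + 2 else 0)) <= 0.
    apply: le_trans; first exact: setmin_le nQ.
    rewrite /=.
    rewrite (negbTE nC) big1 ?addr0.
      by apply: le_trans; first exact: setmin_le ijn; rewrite /A0 eqxx.
    move=> m /andP[mNd nm]; case: ifP => // mU; exfalso.
    have : m \subset row i.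
      case: (hval _ (rowP i)) => _ _ _ hU _; rewrite -hU; exact: bigcup_sup.
    by move=> mr; move/negP: nsub; apply; apply: subset_trans nm mr.
  have G : 1 <= setmin (col j)
      (fun c : cell N M => if c \in row i then A0 c + 2 else A0 c).
    apply: (@setmin_ge _ _ _ _ (i, j)); first by rewrite inE.
    move=> c _; rewrite /A0; case: (c =P (i, j)) => [->|_].
      by rewrite inE /= eqxx; lra.
    by case: ifP => _; lra.
  by rewrite H in L; have := le_trans G L; rewrite ler10.
have colU j : \bigcup_(n in SQ (col j)) n = col j.
  by case: (hval _ (colP j)).
have nex i j : exists n, (n \in SQ (col j)) && ((i, j) \in n).
  have : (i, j) \in \bigcup_(n in SQ (col j)) n by rewrite colU inE.
  move=> /bigcupP [n nQ ijn]; exists n; apply/andP; split; [exact: nQ | exact: ijn].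
pose nn i j := odflt set0 [pick n | (n \in SQ (col j)) && ((i, j) \in n)].
have nnP i j : (nn i j \in SQ (col j)) && ((i, j) \in nn i j).
  rewrite /nn; case: pickP => [n //|h]; case: (nex i j) => n; by rewrite h.
have nncol i j : nn i j \subset col j.
  apply/subsetP => c cn; rewrite -colU; apply/bigcupP; exists (nn i j) => //.
  by case/andP: (nnP i j).
pose g i j := nn i j \subset row i.
set a := (\max_(i < N) #|SC (row i)|)%N.
set b := (\max_(j < M) #|SQ (col j)|)%N.
have cnt : (N * M <= N * a + M * b)%N.
  have -> : (N * M = \sum_(i < N) \sum_(j < M) ((~~ g i j : nat) + (g i j : nat)))%N.
    rewrite (eq_bigr (fun _ => M)); last first.
      move=> i _; rewrite (eq_bigr (fun _ => 1%N)); last by move=> j _; case: (g i j).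
      by rewrite big_const_ord iter_addn_0 mul1n.
    by rewrite big_const_ord iter_addn_0 mulnC.
  rewrite (eq_bigr (fun i => \sum_(j < M) (~~ g i j : nat) + \sum_(j < M) (g i j : nat)))%N;
    last by move=> i _; rewrite big_split.
  rewrite big_split /= [X in (_ + X)%N]exchange_big /=.
  apply: leq_add.
    apply: leq_trans (_ : \sum_(i < N) a <= _)%N; last by rewrite big_const_ord iter_addn_0 mulnC.
    apply: leq_sum => i _; rewrite sum_bool_card /a.
    apply: leq_trans _ (@leq_bigmax _ (fun i => #|SC (row i)|) i) => /=.
    have inj : {in [set j | ~~ g i j] &, injective (nn i)}.
      move=> j1 j2 _ _ e; have := nnP i j1; case/andP => _; rewrite e.
      by move/(subsetP (nncol i j2)); rewrite inE => /eqP.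
    rewrite -(card_in_imset inj); apply: subset_leq_card; apply/subsetP => n.
    case/imsetP => j; rewrite inE => jin ->.
    by case/andP: (nnP i j) => h1 h2; apply: key h1 h2 jin.
  apply: leq_trans (_ : \sum_(j < M) b <= _)%N; last by rewrite big_const_ord iter_addn_0 mulnC.
  apply: leq_sum => j _; rewrite sum_bool_card /b.
  apply: leq_trans _ (@leq_bigmax _ (fun j => #|SQ (col j)|) j) => /=.
  have inj : {in [set i | g i j] &, injective (nn^~ j)}.
    move=> i1 i2 _; rewrite inE => h2 e; have := nnP i1 j; case/andP => _; rewrite e.
    by move/(subsetP h2); rewrite inE => /eqP.
  rewrite -(card_in_imset inj); apply: subset_leq_card; apply/subsetP => n.
  case/imsetP => i _ ->.
  by case/andP: (nnP i j).
have NMpos : (0 : R) < (N + M)%:R by rewrite ltr0n addn_gt0 hN.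
case: (leqP b a) => hab.
  have [i0 ha] : {i0 : 'I_N | a = #|SC (row i0)|}.
  by apply: bigop.eq_bigmax; rewrite card_ord.
  exists (row i0); split => //; left.
  apply: (@le_trans _ _ (a%:R)).
    rewrite ler_pdivrMr // -natrM ler_nat; apply: leq_trans cnt _.
    by rewrite mulnDr [(a * N)%N]mulnC [(a * M)%N]mulnC leq_add2l leq_mul2l hab orbT.
  by rewrite ler_nat ha leq_addl.
have [j0 hb] : {j0 : 'I_M | b = #|SQ (col j0)|} by rewrite /b; apply: bigop.eq_bigmax; rewrite card_ord.
exists (col j0); split => //; right.
apply: (@le_trans _ _ (b%:R)).
  rewrite ler_pdivrMr // -natrM ler_nat; apply: leq_trans cnt _.
  by rewrite mulnDr [(b * N)%N]mulnC [(b * M)%N]mulnC leq_add2r leq_mul2l (ltnW hab) orbT.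
by rewrite ler_nat hb.
Qed.
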